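(* Let $\mathbf A\in\mathbb C^{m\times n}$, $\mathbf B\in\mathbb C^{s\times n}$, let $\mathbf X_{LS}=(x_{ij})\in\mathbb C^{s\times m}$ be the minimum norm least squares solution of $\mathbf X\mathbf A=\mathbf B$, and let $\check{\mathbf B}=\mathbf B\mathbf A^{*}$ with $i$-th row $\check{\mathbf b}_{i.}$. (i) If $\operatorname{rank}\mathbf A=r\le n<m$, then for all $i=1,\dots,s$, $j=1,\dots,m$, \[x_{ij}=\frac{\sum_{\alpha\in I_{r,m}\{j\}}\left|\left((\mathbf A\mathbf A^{*})_{j.}(\check{\mathbf b}_{i.})\right)^{\alpha}_{\alpha}\right|}{\sum_{\alpha\in I_{r,m}}\left|(\mathbf A\mathbf A^{*})^{\alpha}_{\alpha}\right|}.\] (ii) If $\operatorname{rank}\mathbf A=m$, then for all $i=1,\dots,s$, $j=1,\dots,m$, $x_{ij}=\dfrac{\det\left((\mathbf A\mathbf A^{*})_{j.}(\check{\mathbf b}_{i.})\right)}{\det(\mathbf A\mathbf A^{*})}$.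
   Context: $\mathbf X_{LS}$ is the matrix of minimal Frobenius norm among all $\mathbf X\in\mathbb C^{s\times m}$ minimizing the Frobenius norm $\|\mathbf X\mathbf A-\mathbf B\|$. $\mathbf M_{j.}(\mathbf c)$ denotes $\mathbf M$ with its $j$-th row replaced by the row vector $\mathbf c$. $I_{r,m}$ is the set of strictly increasing sequences of $r$ elements of $\{1,\dots,m\}$, $I_{r,m}\{j\}=\{\alpha\in I_{r,m}:j\in\alpha\}$, $\mathbf M^{\alpha}_{\alpha}$ is the principal submatrix indexed by $\alpha$, $|\cdot|$ is the determinant. *)

(* Defs.v *)
(* Complex scalars: an arbitrary numClosedFieldType C
   (e.g. complex R for R : rcfType, i.e. the complex numbers). *)
From mathcomp Require Import all_boot all_order all_algebra.
Set Implicit Arguments. Unset Strict Implicit. Unset Printing Implicit Defensive.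
Import Order.TTheory GRing.Theory Num.Theory.
Local Open Scope ring_scope.

Section Defs.
Variable C : numClosedFieldType.

Definition ctmx {m n} (A : 'M[C]_(m, n)) : 'M[C]_(n, m) :=
  \matrix_(i, j) (A j i)^*.

Definition frob {m n} (M : 'M[C]_(m, n)) : C :=
  sqrtC (\sum_i \sum_j `|M i j| ^+ 2).

Definition is_ls_sol {s m n} (A : 'M[C]_(m, n)) (B : 'M[C]_(s, n))
  (X : 'M[C]_(s, m)) : Prop :=
  forall Y : 'M[C]_(s, m), frob (X *m A - B) <= frob (Y *m A - B).

Definition is_min_norm_ls {s m n} (A : 'M[C]_(m, n)) (B : 'M[C]_(s, n))
  (X : 'M[C]_(s, m)) : Prop :=
  is_ls_sol A B X /\
  forall Y : 'M[C]_(s, m), is_ls_sol A B Y -> frob X <= frob Y.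

(* M_{j.}(c): M with its j-th row replaced by c *)
Definition rowrepl {m n} (j : 'I_m) (c : 'rV[C]_n) (M : 'M[C]_(m, n))
  : 'M[C]_(m, n) :=
  \matrix_(k, l) if k == j then c 0 l else M k l.
End Defs.

(* alpha in I_{r,m}: strictly increasing maps 'I_r -> 'I_m *)
Definition incr_seq {r m} (f : {ffun 'I_r -> 'I_m}) : bool :=
  [forall i : 'I_r, forall k : 'I_r, (i < k)%N ==> (f i < f k)%N].

Definition princ {R : Type} {r m} (f : {ffun 'I_r -> 'I_m}) (M : 'M[R]_m)
  : 'M[R]_r := mxsub f f M.

(* Main.v *)
Require Import Defs.
From mathcomp Require Import all_boot all_order all_algebra.
From mathcomp Require Import fingroup perm ring sesquilinear spectral zify.
Import Order.TTheory GRing.Theory Num.Theory.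
Local Open Scope ring_scope.

Module Aux.
Set Implicit Arguments. Unset Strict Implicit. Unset Printing Implicit Defensive.

Section Gen.
Variable R : comNzRingType.

Definition rowdiag m (T : {set 'I_m}) (M : 'M[R]_m) : 'M[R]_m :=
  \matrix_(i, j) if i \in T then (i == j)%:R else M i j.

Lemma det_add_diag m (M : 'M[R]_m) (d : 'rV[R]_m) :
  \det (M + diag_mx d) =
  \sum_(T : {set 'I_m}) (\prod_(i in T) d 0 i) * \det (rowdiag T M).
Proof.
rewrite /determinant.
have step (s : {perm 'I_m}) : (-1) ^+ s * \prod_i (M + diag_mx d) i (s i) =
   \sum_(T : {set 'I_m}) (\prod_(i in T) d 0 i) * ((-1) ^+ s * \prod_i rowdiag T M i (s i)).
  rewrite (eq_bigr (fun i => (d 0 i *+ (i == s i)) + M i (s i))); last first.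
    by move=> i _; rewrite !mxE addrC.
  rewrite bigA_distr big_distrr /=; apply: eq_bigr => T _.
  rewrite mulrCA; congr (_ * _).
  rewrite (big_mkcond (fun i => i \in T)) -big_split /=; apply: eq_bigr => i _.
  rewrite !mxE; case: (i \in T) => //=.
  by rewrite mulr_natr.
  by rewrite mul1r.
rewrite (eq_bigr _ (fun s _ => step s)) exchange_big /=; apply: eq_bigr => T _.
by rewrite big_distrr.
Qed.


Definition rr m n (j : 'I_m) (c : 'rV[R]_n) (M : 'M[R]_(m, n)) : 'M[R]_(m, n) :=
  \matrix_(k, l) if k == j then c 0 l else M k l.

Lemma rr_mul m (j : 'I_m) (y : 'rV[R]_m) (P : 'M[R]_m) :
  rr j (y *m P) P = rr j y 1%:M *m P.
Proof.
apply/matrixP => k l; rewrite mxE [RHS]mxE.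
case: (eqVneq k j) => [->|kj].
  by rewrite mxE; apply: eq_bigr => i _; rewrite !mxE eqxx.
rewrite (bigD1 k) //= big1 ?addr0; first by rewrite !mxE (negbTE kj) eqxx mul1r.
by move=> i /negPf ik; rewrite !mxE (negbTE kj) eq_sym ik mul0r.
Qed.

Lemma det_rr1 m (j : 'I_m) (y : 'rV[R]_m) : \det (rr j y 1%:M) = y 0 j.
Proof.
rewrite /determinant (bigD1 1%g) //= [X in _ + X]big1 ?addr0.
  rewrite odd_perm1 expr0 mul1r (bigD1 j) //= big1 ?mulr1.
    by rewrite !mxE perm1 eqxx.
  by move=> i /negPf ij; rewrite !mxE perm1 ij eqxx.
move=> s s1.
have /existsP[i /andP[ij si]] : [exists i, (i != j) && (s i != i)].
  apply: contraR s1 => /existsPn H.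
  have Hi : forall i, i != j -> s i = i.
    by move=> i ij; have := H i; rewrite ij /= negbK => /eqP.
  apply/eqP/permP => i; rewrite perm1.
  case: (eqVneq i j) => [->|]; last exact: Hi.
  apply/eqP; apply: contraT => sj.
  have := Hi (s j) sj => /eqP.
  by rewrite (inj_eq perm_inj) (negbTE sj).
rewrite (bigD1 i) //= !mxE (negbTE ij) eq_sym (negbTE si) mul0r mulr0.
by [].
Qed.

Lemma cramer_row m (j : 'I_m) (y : 'rV[R]_m) (P : 'M[R]_m) :
  y 0 j * \det P = \det (rr j (y *m P) P).
Proof. by rewrite rr_mul det_mulmx det_rr1. Qed.


Lemma incr_inj k m (f : {ffun 'I_k -> 'I_m}) : incr_seq f -> injective f.
Proof.
move=> /forallP H a b fab; apply/eqP; case: (ltngtP a b) => // ab.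
  by have := implyP (forallP (H a) b) ab; rewrite fab ltnn.
by have := implyP (forallP (H b) a) ab; rewrite fab ltnn.
exact/eqP/val_inj.
Qed.

Lemma det_mxsub_perm m (p : {perm 'I_m}) (N : 'M[R]_m) :
  \det (mxsub p p N) = \det N.
Proof.
rewrite mxsubrc -row_permEsub -col_permEsub row_permE col_permE !det_mulmx.
by rewrite !det_perm odd_permV mulrCA -signr_addb addbb mulr1.
Qed.

Lemma det_rowdiag_sub k m (f : {ffun 'I_k -> 'I_m}) (T : {set 'I_m}) (M : 'M[R]_m) :
  incr_seq f -> (forall x, (x \in T) = (x \notin codom f)) ->
  \det (rowdiag T M) = \det (mxsub f f M).
Proof.
move=> fi HT; have finj := incr_inj fi.
have cT : #|T| = (m - k)%N.
  have h1 := cardC T; rewrite card_ord in h1.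
  have h2 : #|[predC T]| = k.
    rewrite -[RHS]card_ord -(card_codom finj).
    by apply: eq_card => x; rewrite !inE HT negbK.
  rewrite h2 in h1; move: h1 => /(congr1 (subn^~ k)) /=.
  by rewrite addnK.
have km : (k <= m)%N.
  have := max_card (mem (codom f)); rewrite card_codom // !card_ord //.
have [l e] : exists l, m = (k + l)%N by exists (m - k)%N; rewrite subnKC.
subst m; rewrite addKn in cT.
pose g (b : 'I_l) : 'I_(k + l) := enum_val (cast_ord (esym cT) b).
have gT b : g b \in T by apply: enum_valP.
have ginj : injective g.
  by move=> a b /enum_val_inj /cast_ord_inj.
have fT a : f a \notin T by rewrite HT negbK codom_f.
pose h (i : 'I_(k + l)) := match split i with inl a => f a | inr b => g b end.
have hinj : injective h.
  move=> i j; rewrite /h -[i]splitK -[j]splitK.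
  case: (split i) => a; case: (split j) => b; rewrite !unsplitK /=.
  - by move/finj ->.
  - by move=> fg; have := fT a; rewrite fg gT.
  - by move=> fg; have := fT b; rewrite -fg gT.
  - by move/ginj ->.
rewrite -(det_mxsub_perm (perm hinj)).
have -> : mxsub (perm hinj) (perm hinj) (rowdiag T M) =
     block_mx (mxsub f f M) (mxsub f g (rowdiag T M)) 0 1%:M.
  apply/matrixP => i j; rewrite mxE !permE /h -[i]splitK -[j]splitK.
  case: (split i) => a; case: (split j) => b; rewrite !unsplitK /=.
  - by rewrite block_mxEul !mxE (negbTE (fT a)).
  - by rewrite block_mxEur !mxE.
  - rewrite block_mxEdl !mxE gT; case: eqP => // gf.
    by have := fT b; rewrite -gf gT.
  - by rewrite block_mxEdr !mxE gT (inj_eq ginj).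
by rewrite det_ublock det1 mulr1.
Qed.

End Gen.

Section Incr.

Definition phi k m (f : {ffun 'I_k -> 'I_m}) : {set 'I_m} := [set x in codom f].

Lemma incr_sorted k m (f : {ffun 'I_k -> 'I_m}) : incr_seq f ->
  sorted (relpre val ltn) (map f (enum 'I_k)).
Proof.
move=> fi; apply: (homo_sorted (e := relpre val ltn)).
  by move=> a b /= ab; exact: (implyP (forallP (forallP fi a) b) ab).
by have := iota_ltn_sorted 0 k; rewrite -val_enum_ord sorted_map.
Qed.

Lemma phi_inj k m : {in [pred f : {ffun 'I_k -> 'I_m} | incr_seq f] &, injective (@phi k m)}.
Proof.
move=> f g fi gi /setP e; apply/ffunP => i.
have : map f (enum 'I_k) = map g (enum 'I_k).
  apply: (irr_sorted_eq (leT := relpre val ltn)).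
  - by move=> a b c /= ab bc; exact: ltn_trans ab bc.
  - by move=> a /=; rewrite ltnn.
  - exact: incr_sorted.
  - exact: incr_sorted.
  move=> x; have := e x; rewrite !inE.
  by rewrite !codomE.
by move/eq_in_map => /(_ i); rewrite mem_enum => ->.
Qed.

Lemma phi_card k m (f : {ffun 'I_k -> 'I_m}) : incr_seq f -> #|phi f| = k.
Proof.
move=> fi; rewrite /phi cardsE card_codom ?card_ord //; exact: incr_inj fi.
Qed.

Lemma enum_sorted m (S : {set 'I_m}) : sorted ltn (map val (enum S)).
Proof.
rewrite -[enum _](eq_filter (mem_enum _)).
rewrite -(eq_filter (mem_map val_inj _)) -filter_map.
by rewrite (sorted_filter ltn_trans) // unlock val_ord_enum iota_ltn_sorted.
Qed.

Lemma phi_surj k m (S : {set 'I_m}) : #|S| = k ->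
  exists2 f : {ffun 'I_k -> 'I_m}, incr_seq f & phi f = S.
Proof.
move=> cS; have km : (k <= m)%N by rewrite -cS -[X in (_ <= X)%N]card_ord max_card.
exists [ffun i => nth (widen_ord km i) (enum S) i].
  apply/forallP => a; apply/forallP => b; apply/implyP => ab; rewrite !ffunE.
  have sz : size (enum S) = k by rewrite -cardE.
  have := @sorted_ltn_nth _ ltn ltn_trans 0%N _ (enum_sorted S) a b.
  rewrite !inE size_map sz !ltn_ord => /(_ isT isT ab).
  by rewrite !(nth_map (widen_ord km a)) ?sz ?ltn_ord // (set_nth_default (widen_ord km a) (widen_ord km b)) ?sz.
apply/setP => x; rewrite inE; apply/codomP/idP => [[i ->]|xS].
  by rewrite ffunE -(mem_enum S) mem_nth // -cardE cS.
have xe : x \in enum S by rewrite mem_enum.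
have ik : (index x (enum S) < k)%N by rewrite -cS cardE index_mem.
exists (Ordinal ik); rewrite ffunE /= nth_index //.
Qed.

Lemma sum_incr (V : nmodType) k m (P : pred {set 'I_m}) (G : {set 'I_m} -> V) :
  \sum_(f : {ffun 'I_k -> 'I_m} | incr_seq f && P (phi f)) G (phi f)
  = \sum_(S : {set 'I_m} | (#|S| == k) && P S) G S.
Proof.
rewrite big_mkcondr [RHS]big_mkcondr /=.
set G' := fun S => if P S then G S else 0.
rewrite (eq_bigl (fun f => f \in [set f : {ffun 'I_k -> 'I_m} | incr_seq f])); last first.
  by move=> f; rewrite inE.
rewrite -(big_imset G'); last first.
  by move=> f g; rewrite !inE => fi gi; apply: phi_inj.
apply: eq_bigl => S; apply/imsetP/idP => [[f]|/eqP cS].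
  by rewrite inE => fi ->; rewrite phi_card.
by have [f fi <-] := phi_surj cS; exists f; rewrite ?inE.
Qed.

End Incr.

Lemma rank_mxsub (F : fieldType) k m (f : 'I_k -> 'I_m) (M : 'M[F]_m) :
  (\rank (mxsub f f M) <= \rank M)%N.
Proof.
rewrite mxsubrc; apply: leq_trans (mxrankS (rowsub_sub _ _)) _.
rewrite -mxrank_tr -[X in (_ <= X)%N]mxrank_tr.
rewrite trmx_mxsub; exact: mxrankS (rowsub_sub _ _).
Qed.

Lemma rowdiag_det0 (F : fieldType) m (T : {set 'I_m}) (M : 'M[F]_m) :
  (\rank M < #|~: T|)%N -> \det (rowdiag T M) = 0.
Proof.
move=> rk; have [f fi fT] := phi_surj (erefl #|~: T|).
rewrite (det_rowdiag_sub (f := f)) //; last first.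
  by move=> x; have /setP/(_ x) := fT; rewrite !inE /= => ->; rewrite negbK.
apply/eqP; apply: contraLR rk => d0; rewrite -leqNgt.
have : mxsub f f M \in unitmx by rewrite unitmxE unitfE.
move/mxrank_unit => <-; exact: rank_mxsub.
Qed.

Lemma rowdiag_map (R : comNzRingType) m (T : {set 'I_m}) (M : 'M[R]_m) :
  rowdiag T (map_mx polyC M) = map_mx polyC (rowdiag T M).
Proof. by apply/matrixP => i j; rewrite !mxE; case: (i \in T) => //; rewrite rmorph_nat. Qed.

Lemma coef_det_diagX (R : comNzRingType) m (M : 'M[R]_m) (P : pred 'I_m) (n : nat) :
  (\det (map_mx polyC M + diag_mx (\row_k (if P k then 'X else 0)))) `_ n
   = \sum_(T : {set 'I_m} | [forall i in T, P i] && (#|T| == n)) \det (rowdiag T M).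
Proof.
rewrite det_add_diag coef_sum [RHS]big_mkcond /=.
apply: eq_bigr => T _.
rewrite rowdiag_map det_map_mx /=.
have -> : \prod_(i in T) (\row_k (if P k then 'X else 0) : 'rV[{poly R}]_m) 0 i =
          if [forall i in T, P i] then 'X ^+ #|T| else 0.
  case: (boolP [forall i in T, P i]) => [/forallP H|/forallPn [i]].
    rewrite -prodr_const; apply: eq_bigr => i iT; rewrite mxE.
    by have := H i; rewrite iT /= => ->.
  rewrite negb_imply => /andP[iT Pi].
  by rewrite (bigD1 i) //= mxE (negbTE Pi) mul0r.
case: ifP => _; last by rewrite mul0r coef0.
rewrite mulrC coefCM coefXn eq_sym; case: eqP => _; by rewrite ?mulr1 ?mulr0.
Qed.


Section IP.
Import Num.Def.
Variable C : numClosedFieldType.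

Definition ip s m (U V : 'M[C]_(s, m)) : C := \sum_i \sum_j U i j * (V i j)^*.
Definition nsq s m (U : 'M[C]_(s, m)) : C := ip U U.

Lemma frobE s m (U : 'M[C]_(s, m)) : frob U = sqrtC (nsq U).
Proof.
rewrite /frob /nsq /ip; congr sqrtC; apply: eq_bigr => i _; apply: eq_bigr => j _.
by rewrite normCK.
Qed.

Lemma nsq_ge0 s m (U : 'M[C]_(s, m)) : 0 <= nsq U.
Proof. by apply: sumr_ge0 => i _; apply: sumr_ge0 => j _; apply: mul_conjC_ge0. Qed.

Lemma nsq_eq0 s m (U : 'M[C]_(s, m)) : nsq U = 0 -> U = 0.
Proof.
move=> /eqP; rewrite psumr_eq0 => [/allP H|i _]; last first.
  by apply: sumr_ge0 => j _; apply: mul_conjC_ge0.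
apply/matrixP => i j; rewrite mxE; have /implyP := H i (mem_index_enum _).
rewrite /= psumr_eq0 => [/(_ isT)/allP/(_ j (mem_index_enum _))|k _].
  by rewrite /= mul_conjC_eq0 => /eqP.
exact: mul_conjC_ge0.
Qed.

Lemma frob_le s m (U V : 'M[C]_(s, m)) : (frob U <= frob V) = (nsq U <= nsq V).
Proof. by rewrite !frobE ler_sqrtC // qualifE /= nsq_ge0. Qed.

Lemma ipC s m (U V : 'M[C]_(s, m)) : ip V U = (ip U V)^*.
Proof.
rewrite /ip rmorph_sum; apply: eq_bigr => i _; rewrite rmorph_sum.
by apply: eq_bigr => j _ /=; rewrite rmorphM /= conjCK mulrC.
Qed.

Lemma nsqD s m (E D : 'M[C]_(s, m)) (t : C) :
  nsq (E + t *: D) = nsq E + t^* * ip E D + t * ip D E + t * t^* * nsq D.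
Proof.
rewrite /nsq /ip !mulr_sumr -!big_split /=; apply: eq_bigr => i _.
rewrite !mulr_sumr -!big_split /=; apply: eq_bigr => j _.
rewrite !mxE rmorphD rmorphM /=; ring.
Qed.

Lemma ip_perp s m (E D : 'M[C]_(s, m)) :
  (forall t : C, nsq E <= nsq (E + t *: D)) -> ip E D = 0.
Proof.
move=> H; have [D0|Dn0] := eqVneq (nsq D) 0.
  by rewrite (nsq_eq0 D0) /ip big1 // => i _; rewrite big1 // => j _; rewrite mxE conjC0 mulr0.
set a := ip E D; set n := nsq D.
have n_gt0 : 0 < n by rewrite lt_def Dn0 nsq_ge0.
have nR : n^* = n by apply/eqP; rewrite -CrealE; apply: ger0_real; apply: nsq_ge0.
have := H (- a / n); rewrite nsqD -/a -/n ipC -/a.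
rewrite rmorphM rmorphN /= fmorphV /= nR.
have -> : nsq E + - a^* / n * a + - a / n * a^* + - a / n * (- a^* / n) * n
   = nsq E - (a * a^*) / n by field; rewrite lt0r_neq0.
rewrite -subr_ge0 addrAC subrr add0r oppr_ge0 pmulr_lle0 ?invr_gt0 // => aa.
apply/eqP; rewrite -mul_conjC_eq0 eq_le aa mul_conjC_ge0 //.
Qed.


Lemma ctmxE m n (M : 'M[C]_(m, n)) : ctmx M = map_mx conjC (M^T).
Proof. by apply/matrixP => i j; rewrite /ctmx !mxE. Qed.

Lemma ctmxK m n (M : 'M[C]_(m, n)) : ctmx (ctmx M) = M.
Proof. by apply/matrixP => i j; rewrite /ctmx !mxE conjCK. Qed.

Lemma ctmx_mul m n p (M : 'M[C]_(m, n)) (N : 'M[C]_(n, p)) :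
  ctmx (M *m N) = ctmx N *m ctmx M.
Proof.
apply/matrixP => i j; rewrite /ctmx !mxE rmorph_sum; apply: eq_bigr => k _ /=.
by rewrite !mxE rmorphM mulrC.
Qed.

Lemma ip_mulr s p m (U : 'M[C]_(s, m)) (V : 'M[C]_(s, p)) (G : 'M[C]_(p, m)) :
  ip U (V *m G) = ip (U *m ctmx G) V.
Proof.
rewrite /ip; apply: eq_bigr => i _.
under eq_bigr => j _ do rewrite mxE rmorph_sum mulr_sumr.
rewrite exchange_big /=; apply: eq_bigr => k _.
rewrite mxE mulr_suml; apply: eq_bigr => j _.
by rewrite /ctmx mxE rmorphM /=; ring.
Qed.

Lemma ls_normal s m n (A : 'M[C]_(m, n)) (B : 'M[C]_(s, n)) (X : 'M[C]_(s, m)) :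
  is_ls_sol A B X -> (X *m A - B) *m ctmx A = 0.
Proof.
move=> hX; set E := X *m A - B.
have perp Z : ip E (Z *m A) = 0.
  apply: ip_perp => t; rewrite -frob_le.
  have -> : E + t *: (Z *m A) = (X + t *: Z) *m A - B.
    by rewrite mulmxDl -scalemxAl /E addrAC.
  exact: hX.
apply: nsq_eq0; rewrite /nsq -ip_mulr; exact: perp.
Qed.

Local Notation ortho B := (orthomx conjC (mx_of_hermitian (hermitian1mx _)) B).

Lemma minnorm_row s m n (A : 'M[C]_(m, n)) (B : 'M[C]_(s, n)) (X : 'M[C]_(s, m)) :
  is_min_norm_ls A B X -> exists Y : 'M[C]_(s, n), X = Y *m ctmx A.
Proof.
move=> [hX1 hX2].
have perp Z : Z *m A = 0 -> ip X Z = 0.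
  move=> ZA; apply: ip_perp => t; rewrite -frob_le; apply: hX2 => Y.
  by rewrite mulmxDl -scalemxAl ZA scaler0 addr0; apply: hX1.
set W := ortho (ctmx A).
have WA : W *m A = 0.
  have : (W <= ortho (ctmx A))%MS by [].
  by rewrite orthomx1E ctmxE trmxCK => /eqP.
have XW : X *m ctmx W = 0.
  apply: nsq_eq0; rewrite /nsq -ip_mulr; apply: perp.
  by rewrite -mulmxA WA mulmx0.
have : (X <= ortho W)%MS by rewrite orthomx1E -ctmxE XW.
rewrite /W ortho_id => /submxP [D ->]; by exists D.
Qed.


Lemma kerH p m n (A : 'M[C]_(m, n)) (V : 'M[C]_(p, m)) :
  V *m (A *m ctmx A) = 0 -> V *m A = 0.
Proof.
move=> VH; apply: nsq_eq0; rewrite /nsq ip_mulr -mulmxA VH.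
by rewrite /ip big1 // => i _; rewrite big1 // => j _; rewrite mxE mul0r.
Qed.

Lemma rankH m n (A : 'M[C]_(m, n)) : \rank (A *m ctmx A) = \rank A.
Proof.
apply/eqP; rewrite eqn_leq mxrankM_maxl /=.
have : (kermx (A *m ctmx A) <= kermx A)%MS by rewrite sub_kermx; apply/eqP; apply: kerH; exact: mulmx_ker.
move/mxrankS; rewrite !mxrank_ker.
have := rank_leq_row A; have := rank_leq_row (A *m ctmx A); lia.
Qed.

Lemma rank_ctmx m n (A : 'M[C]_(m, n)) : \rank (ctmx A) = \rank A.
Proof. by rewrite ctmxE mxrank_map mxrank_tr. Qed.

End IP.


Section Spec.
Import Num.Def.
Variable C : numClosedFieldType.

Definition Hpoly m (P : pred 'I_m) (M : 'M[C]_m) : 'M[{poly C}]_m :=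
  map_mx polyC M + diag_mx (\row_k (if P k then 'X else 0)).

Lemma coef_Hpoly_T m (M : 'M[C]_m) i :
  (\det (Hpoly xpredT M))`_i = \sum_(T : {set 'I_m} | #|T| == i) \det (rowdiag T M).
Proof.
rewrite /Hpoly (coef_det_diagX _ xpredT); apply: eq_bigl => T.
by have -> : [forall k in T, xpredT k] by apply/forall_inP.
Qed.

Lemma det_Hpoly_spec m (M : 'M[C]_m) (P : 'M[C]_m) (mu : 'rV[C]_m) :
  P \in unitmx -> M = invmx P *m diag_mx mu *m P ->
  \det (Hpoly xpredT M) = \prod_k ('X + (mu 0 k)%:P).
Proof.
move=> Pu ->; rewrite /Hpoly.
have -> : diag_mx (\row_k (if xpredT k then 'X else 0)) =
     map_mx polyC (invmx P) *m 'X%:M *m map_mx polyC P :> 'M[{poly C}]_m.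
  rewrite mul_mx_scalar -scalemxAl -map_mxM mulVmx // map_mx1.
  by apply/matrixP => i j; rewrite !mxE mulr_natr.
rewrite !(map_mxM (@polyC C)) -mulmxDl -mulmxDr !det_mulmx !det_map_mx mulrC mulrA.
rewrite -rmorphM /= -det_mulmx mulmxV // det1 mul1r.
have -> : map_mx polyC (diag_mx mu) + 'X%:M = diag_mx (\row_k ('X + (mu 0 k)%:P)).
  apply/matrixP => i j; rewrite !mxE.
  by case: (i == j); rewrite ?mulr1n ?mulr0n ?addr0 // addrC.
by rewrite det_diag; apply: eq_bigr => k _; rewrite mxE.
Qed.


Lemma denom_ne0 m n (A : 'M[C]_(m, n)) :
  \sum_(T : {set 'I_m} | #|T| == (m - \rank A)%N) \det (rowdiag T (A *m ctmx A)) != 0.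
Proof.
set H := A *m ctmx A; set r := \rank A.
have rH : \rank H = r := rankH A.
have Hn : H \is normalmx.
  by apply/normalmxP; rewrite -ctmxE /H ctmx_mul ctmxK.
move/orthomx_spectralP: Hn => HE.
set P := spectralmx H in HE; set mu := spectral_diag H in HE.
have dH := det_Hpoly_spec (spectral_unit H) HE.
have hz i : (i < m - r)%N -> (\det (Hpoly xpredT H))`_i = 0.
  move=> ir; rewrite coef_Hpoly_T big1 // => T /eqP cT; apply: rowdiag_det0; rewrite rH.
  have := cardsC T; rewrite card_ord cT; lia.
rewrite -coef_Hpoly_T; rewrite dH in hz *.
set Z := [set k | mu 0 k == 0].
have eP : \prod_k ('X + (mu 0 k)%:P) = 'X ^+ #|Z| * \prod_(k in ~: Z) ('X + (mu 0 k)%:P).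
  rewrite (bigID (mem Z)) /=; congr (_ * _).
    rewrite -prodr_const; apply: eq_bigr => k; rewrite inE => /eqP ->; by rewrite addr0.
  by apply: eq_bigl => k; rewrite !inE.
rewrite eP in hz *.
set q := \prod_(k in ~: Z) _.
have q0 : q`_0 != 0.
  rewrite -horner_coef0 horner_prod; apply/prodf_neq0 => k.
  by rewrite !inE hornerD hornerX hornerC add0r.
have rD : (r <= #|~: Z|)%N.
  apply: (@leq_trans (\rank (diag_mx mu))).
    rewrite -rH HE; apply: leq_trans (mxrankM_maxl _ _) _; exact: mxrankM_maxr.
  pose g := fun i : 'I_#|~: Z| => enum_val i.
  have sub : (diag_mx mu <= rowsub g (diag_mx mu))%MS.
    apply/row_subP => k; case: (boolP (k \in Z)) => kZ.
      have -> : row k (diag_mx mu) = 0.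
        by apply/rowP => l; rewrite !mxE; rewrite inE in kZ; rewrite (eqP kZ) mul0rn.
      exact: sub0mx.
    have kZ' : k \in ~: Z by rewrite inE.
    rewrite -(enum_rankK_in kZ' kZ') -row_rowsub; exact: row_sub.
  by apply: leq_trans (mxrankS sub) _; apply: rank_leq_row.
have zle : (#|Z| <= m - r)%N by have := cardsC Z; rewrite card_ord; lia.
have zge : (m - r <= #|Z|)%N.
  rewrite leqNgt; apply/negP => zl; have := hz _ zl; rewrite coefXnM ltnn subnn.
  by move/eqP; rewrite (negbTE q0).
have -> : (m - r = #|Z|)%N by apply/eqP; rewrite eqn_leq zle zge.
by rewrite coefXnM ltnn subnn.
Qed.

End Spec.


Lemma rr_mulG (R : comNzRingType) m n p (j : 'I_m) (w : 'rV[R]_n) (N : 'M[R]_(m, n))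
  (G : 'M[R]_(n, p)) : rr j (w *m G) (N *m G) = rr j w N *m G.
Proof.
apply/matrixP => k l; rewrite mxE [RHS]mxE; under [RHS]eq_bigr => t _ do rewrite mxE.
by case: ifP => _; rewrite mxE.
Qed.

Lemma sum_sets_incr (C : numClosedFieldType) r m (P : pred 'I_m) (M : 'M[C]_m) :
  (r <= m)%N ->
  \sum_(f : {ffun 'I_r -> 'I_m} | incr_seq f && [forall i in ~: phi f, P i])
      \det (princ f M)
  = \sum_(T : {set 'I_m} | [forall i in T, P i] && (#|T| == m - r)%N) \det (rowdiag T M).
Proof.
move=> rm.
rewrite (eq_bigr (fun f => \det (rowdiag (~: phi f) M))); last first.
  move=> f /andP[fi _]; rewrite /princ (det_rowdiag_sub (f := f)) // => x.
  by rewrite !inE.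
rewrite (@sum_incr _ r m (fun S => [forall i in ~: S, P i]) (fun S => \det (rowdiag (~: S) M))).
rewrite [RHS](reindex_inj (@setC_inj _)) /=; apply: eq_bigl => S.
rewrite andbC; congr (_ && _).
rewrite [#|S|]cardsCs card_ord; have : (#|~: S| <= m)%N by rewrite -[X in (_ <= X)%N]card_ord max_card.
move: #|~: S| => c cm; apply/idP/idP => /eqP e; apply/eqP; lia.
Qed.

Lemma rr_Hpoly (C : numClosedFieldType) m (j : 'I_m) (u : 'rV[C]_m) (H : 'M[C]_m) :
  rr j (map_mx polyC u) (Hpoly xpredT H) = Hpoly (fun k => k != j) (rr j u H).
Proof.
apply/matrixP => a b; rewrite /Hpoly !mxE.
by case: (eqVneq a j) => [->|aj] /=; rewrite ?eqxx ?mul0rn ?addr0.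
Qed.

Lemma det_rr_split (R : comNzRingType) m (j : 'I_m) (u v : 'rV[R]_m) (c : R) (M : 'M[R]_m) :
  \det (rr j (u + c *: v) M) = \det (rr j u M) + c * \det (rr j v M).
Proof.
rewrite -[\det (rr j u M)]mul1r.
apply: (determinant_multilinear (i0 := j)).
- by apply/rowP => l; rewrite !mxE eqxx mul1r.
- by apply/matrixP => a b; rewrite !mxE eq_sym (negbTE (neq_lift j a)).
- by apply/matrixP => a b; rewrite !mxE eq_sym (negbTE (neq_lift j a)).
Qed.

End Aux.
Import Aux.

Theorem theorem4p2 (C : numClosedFieldType) (m n s : nat)
  (A : 'M[C]_(m, n)) (B : 'M[C]_(s, n)) (X : 'M[C]_(s, m))
  (hX : is_min_norm_ls A B X) :
  (forall r : nat, \rank A = r -> (r <= n)%N -> (n < m)%N ->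
     forall (i : 'I_s) (j : 'I_m),
       X i j =
       (\sum_(f : {ffun 'I_r -> 'I_m} | incr_seq f && (j \in codom f))
           \det (princ f (rowrepl j (row i (B *m ctmx A)) (A *m ctmx A))))
       / (\sum_(f : {ffun 'I_r -> 'I_m} | incr_seq f)
           \det (princ f (A *m ctmx A))))
  /\
  (\rank A = m ->
     forall (i : 'I_s) (j : 'I_m),
       X i j = \det (rowrepl j (row i (B *m ctmx A)) (A *m ctmx A))
               / \det (A *m ctmx A)).
Proof.
have hN := ls_normal hX.1.
have XH : X *m (A *m ctmx A) = B *m ctmx A.
  by apply/eqP; rewrite -subr_eq0 mulmxA -mulmxBl hN.
have rowb i : row i (B *m ctmx A) = row i X *m (A *m ctmx A) by rewrite -XH row_mul.
split; last first.
  move=> rA i j.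
  have Hu : A *m ctmx A \in unitmx by rewrite -row_full_unit /row_full rankH rA.
  have Dn0 : \det (A *m ctmx A) != 0 by rewrite -unitfE -unitmxE.
  apply: (canRL (mulfK Dn0)).
  rewrite (_ : rowrepl j (row i (B *m ctmx A)) (A *m ctmx A) =
         rr j (row i (B *m ctmx A)) (A *m ctmx A)) //.
  by rewrite rowb -cramer_row mxE.
move=> r rA rn nm i j.
have rm : (r < m)%N by apply: leq_ltn_trans rn nm.
pose H := A *m ctmx A.
pose x := row i X.
have Xij : X i j = x 0 j by rewrite mxE.
pose Mb := rowrepl j (row i (B *m ctmx A)) H.
pose Mx := rr j x H.
have DE : \sum_(f : {ffun 'I_r -> 'I_m} | incr_seq f) \det (princ f H)
        = (\det (Hpoly xpredT H))`_(m - r).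
  transitivity (\sum_(f : {ffun 'I_r -> 'I_m} | incr_seq f && [forall k in ~: phi f, xpredT k]) \det (princ f H)).
    apply: eq_bigl => f; have -> : [forall k in ~: phi f, xpredT k] by apply/forall_inP.
    by rewrite andbT.
  rewrite (sum_sets_incr _ _ (ltnW rm)) coef_Hpoly_T; apply: eq_bigl => T.
  by have -> : [forall k in T, xpredT k] by apply/forall_inP.
have NE : \sum_(f : {ffun 'I_r -> 'I_m} | incr_seq f && (j \in codom f)) \det (princ f Mb)
        = (\det (Hpoly (fun k => k != j) Mb))`_(m - r).
  transitivity (\sum_(f : {ffun 'I_r -> 'I_m} | incr_seq f && [forall k in ~: phi f, k != j]) \det (princ f Mb)).
    apply: eq_bigl => f; congr (_ && _).
    apply/idP/forall_inP => [jf k|H1].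
      by rewrite !inE; apply: contra => /eqP ->.
    by have := H1 j; rewrite !inE eqxx => /contraR /(_ isT).
  by rewrite (sum_sets_incr _ _ (ltnW rm)) /Hpoly (coef_det_diagX Mb (fun k => k != j) (m - r)).
have Dn0 : (\det (Hpoly xpredT H))`_(m - r) != 0.
  rewrite coef_Hpoly_T; have := denom_ne0 A; rewrite rA.
  by rewrite (eq_bigl (fun T : {set 'I_m} => #|T| == (m - r)%N)).
have rMx : (\rank Mx <= r)%N.
  have [Y XY] := minnorm_row hX.
  rewrite /Mx /x /H XY row_mul rr_mulG -rA -(rank_ctmx A); exact: mxrankM_maxr.
have van : (\det (Hpoly (fun k => k != j) Mx))`_((m - r).-1) = 0.
  rewrite /Hpoly coef_det_diagX big1 // => T /andP[_ /eqP cT]; apply: rowdiag_det0.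
  apply: leq_ltn_trans rMx _; have := cardsC T; rewrite card_ord cT; lia.
pose Hp := Hpoly xpredT H.
have HpE : Hp = map_mx polyC H + 'X%:M.
  by rewrite /Hp /Hpoly; congr (_ + _); apply/matrixP => a b; rewrite !mxE.
pose xp := map_mx polyC x.
have MbE : Mb = rr j (x *m H) H by rewrite /Mb rowb.
have key : (x 0 j)%:P * \det Hp = \det (Hpoly (fun k => k != j) Mb) + 'X * \det (Hpoly (fun k => k != j) Mx).
  have := cramer_row j xp Hp; rewrite mxE => ->.
  have -> : xp *m Hp = map_mx polyC (x *m H) + 'X *: xp.
    by rewrite HpE mulmxDr mul_mx_scalar (map_mxM (@polyC C) x H).
  by rewrite det_rr_split /Hp !rr_Hpoly MbE.
rewrite Xij DE NE; apply: (canRL (mulfK Dn0)).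
have := congr1 (fun p : {poly C} => p`_(m - r)) key.
rewrite coefCM coefD coefXM.
have -> : (m - r == 0)%N = false by apply/negbTE; rewrite subn_eq0 -ltnNge.
by rewrite van addr0 mulrC => ->.
Qed.
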